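(* Let $q$ be a prime power, let $\mathbb{F}=\mathrm{GF}(q^2)$, and let $H\subseteq \mathbb{F}^\ast$ be the (unique) subgroup of the multiplicative group of order $q+1$. Let $G(q^2,q+1)$ be the graph whose vertex set is $(\mathbb{F}\times\mathbb{F}\setminus\{(0,0)\})/\sim$, where $(a_1,b_1)\sim(a_2,b_2)$ iff there is $h\in H$ with $a_1=ha_2$ and $b_1=hb_2$, and in which two distinct vertices $\langle a,b\rangle$ and $\langle x,y\rangle$ are adjacent iff $ax+by\in H$. Then $G(q^2,q+1)$ is $K_{3,3}$-free.
   Context: $\langle a,b\rangle$ denotes the equivalence class of the pair $(a,b)$; the adjacency condition does not depend on the chosen representatives. The graph is simple (no loops). A graph is $K_{s,t}$-free if it contains no (not necessarily induced) subgraph isomorphic to the complete bipartite graph $K_{s,t}$. *)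

(* Defs.v *)
From mathcomp Require Import all_boot all_algebra all_fingroup all_field.
Set Implicit Arguments. Unset Strict Implicit. Unset Printing Implicit Defensive.
Import GRing.Theory.
Local Open Scope ring_scope.

Definition prime_power (q : nat) : Prop :=
  exists p k : nat, [/\ prime p, (0 < k)%N & q = (p ^ k)%N].

Definition Hset (F : finFieldType) (H : {set {unit F}}) : {set F} :=
  [set val h | h in H].

Definition vclass (F : finFieldType) (H : {set {unit F}}) (p : F * F)
  : {set F * F} := [set (val h * p.1, val h * p.2) | h in H].

Definition vertices (F : finFieldType) (H : {set {unit F}}) : {set {set F * F}} :=
  [set vclass H p | p in [set p : F * F | p != (0, 0)]].

(* adjacency: distinct classes with representatives (a,b),(x,y), ax+by in H
   (independent of the representatives) *)
Definition adj (F : finFieldType) (H : {set {unit F}}) (C D : {set F * F}) : bool :=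
  (C != D) &&
  [exists p in C, exists r in D, p.1 * r.1 + p.2 * r.2 \in Hset H].

Definition Kst_free (V : finType) (Vs : {set V}) (e : rel V) (s t : nat) : Prop :=
  ~ exists A B : {set V},
      [/\ A \subset Vs, B \subset Vs, [disjoint A & B],
          #|A| = s & #|B| = t] /\
      (forall a b, a \in A -> b \in B -> e a b).

(* Main.v *)
Require Import Defs.
From mathcomp Require Import all_boot all_algebra all_fingroup all_field.
From mathcomp Require Import ring.
Set Implicit Arguments. Unset Strict Implicit. Unset Printing Implicit Defensive.
Import GRing.Theory.
Local Open Scope ring_scope.

Section Core.
Variables (F : fieldType) (K : pred F) (q : nat).
Hypothesis Kmul : forall x y, K x -> K y -> K (x * y).
Hypothesis Kinv : forall x, K x -> K x^-1.
Hypothesis Kne0 : forall x, K x -> x != 0.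
Hypothesis frob : forall x y : F, (x + y) ^+ q = x ^+ q + y ^+ q.
Hypothesis Kpow : forall x, K x -> x ^+ q.+1 = 1.

Definition dot (u v : F * F) := u.1 * v.1 + u.2 * v.2.
Definition det (u v : F * F) := u.1 * v.2 - u.2 * v.1.
Definition sc (l : F) (u : F * F) := (l * u.1, l * u.2).
Definition dep (u u' : F * F) := exists l, K l /\ u' = sc l u.

Lemma Kdiv x y : K x -> K y -> K (x / y).
Proof. by move=> Kx Ky; apply: Kmul => //; apply: Kinv. Qed.

Lemma det0_sc (u u' : F * F) : u != (0,0) -> det u u' = 0 ->
  exists l, u' = sc l u.
Proof.
case: u u' => [a b] [c d] /= nz; rewrite /det /= => /eqP; rewrite subr_eq0 => /eqP E.
have [a0|a0] := eqVneq a 0.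
  subst a; have b0 : b != 0 by apply: contraNneq nz => ->.
  exists (d / b); rewrite /sc /=; congr (_, _).
    by move: E; rewrite mul0r => /esym/eqP; rewrite mulf_eq0 (negbTE b0) /= => /eqP ->; rewrite mulr0.
  by rewrite divfK.
exists (c / a); rewrite /sc /=; congr (_, _); first by rewrite divfK.
by apply: (mulfI a0); rewrite E mulrA mulrCA divff // mulr1 mulrC.
Qed.

Lemma indep u u' v : u != (0,0) -> K (dot u v) -> K (dot u' v) -> ~ dep u u' ->
  det u u' != 0.
Proof.
move=> nz Ku Ku' nd; apply/eqP => /(det0_sc nz) [l El]; apply: nd.
exists l; split => //.
have : dot u' v = l * dot u v by rewrite El /dot /sc /=; ring.
move=> E; have := Kdiv Ku' Ku; rewrite E mulfK //; exact: Kne0.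
Qed.

Lemma quad_root a b t : K t -> K (a + b * t) ->
  b * a ^+ q * t ^+ 2 + (a * a ^+ q + b * b ^+ q - 1) * t + a * b ^+ q = 0.
Proof.
move=> Kt Kab; have E1 := Kpow Kab; have E2 := Kpow Kt.
rewrite exprS frob exprMn in E1; rewrite exprS in E2.
have : t * (a + b * t) * (a ^+ q + b ^+ q * t ^+ q) = t by rewrite -mulrA E1 mulr1.
move=> E.
transitivity ((a + b * t) * (a ^+ q * t + b ^+ q * (t * t ^+ q)) - t).
  by rewrite E2; ring.
have -> : (a + b * t) * (a ^+ q * t + b ^+ q * (t * t ^+ q)) =
  t * (a + b * t) * (a ^+ q + b ^+ q * t ^+ q) by ring.
by rewrite E subrr.
Qed.

Lemma three_roots (c2 c1 c0 t1 t2 t3 : F) : c2 != 0 ->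
  c2 * t1 ^+ 2 + c1 * t1 + c0 = 0 -> c2 * t2 ^+ 2 + c1 * t2 + c0 = 0 ->
  c2 * t3 ^+ 2 + c1 * t3 + c0 = 0 -> t1 != t2 -> t1 != t3 -> t2 != t3 -> False.
Proof.
move=> c20 e1 e2 e3 d12 d13 d23.
have h12 : c2 * (t1 + t2) + c1 = 0.
  have : (t1 - t2) * (c2 * (t1 + t2) + c1) = 0.
    transitivity ((c2 * t1 ^+ 2 + c1 * t1 + c0) - (c2 * t2 ^+ 2 + c1 * t2 + c0)); first ring.
    by rewrite e1 e2 subrr.
  by move/eqP; rewrite mulf_eq0 subr_eq0 (negbTE d12) => /eqP.
have h13 : c2 * (t1 + t3) + c1 = 0.
  have : (t1 - t3) * (c2 * (t1 + t3) + c1) = 0.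
    transitivity ((c2 * t1 ^+ 2 + c1 * t1 + c0) - (c2 * t3 ^+ 2 + c1 * t3 + c0)); first ring.
    by rewrite e1 e3 subrr.
  by move/eqP; rewrite mulf_eq0 subr_eq0 (negbTE d13) => /eqP.
have : c2 * (t2 - t3) = 0.
  transitivity ((c2 * (t1 + t2) + c1) - (c2 * (t1 + t3) + c1)); first ring.
  by rewrite h12 h13 subrr.
by move/eqP; rewrite mulf_eq0 (negbTE c20) subr_eq0 (negbTE d23).
Qed.

Lemma det_inj u1 u2 x : det u1 u2 != 0 -> dot u1 x = 0 -> dot u2 x = 0 -> x = (0, 0).
Proof.
move=> d e1 e2.
have h1 : x.1 * det u1 u2 = 0.
  by transitivity (u2.2 * dot u1 x - u1.2 * dot u2 x); [rewrite /dot /det; ring | rewrite e1 e2; ring].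
have h2 : x.2 * det u1 u2 = 0.
  by transitivity (u1.1 * dot u2 x - u2.1 * dot u1 x); [rewrite /dot /det; ring | rewrite e1 e2; ring].
move/eqP: h1; move/eqP: h2; rewrite !mulf_eq0 (negbTE d) !orbF => /eqP h2 /eqP h1.
by case: x h1 h2 {e1 e2} => a b /= -> ->.
Qed.

Lemma tau_eq u1 u2 v v' : det u1 u2 != 0 -> K (dot u1 v) -> K (dot u1 v') ->
  dot u2 v / dot u1 v = dot u2 v' / dot u1 v' -> dep v' v.
Proof.
move=> d Kv Kv' E; have s0 := Kne0 Kv; have s0' := Kne0 Kv'.
exists (dot u1 v / dot u1 v'); split; first exact: Kdiv.
have : (v.1 - dot u1 v / dot u1 v' * v'.1, v.2 - dot u1 v / dot u1 v' * v'.2) = (0, 0).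
  apply: (det_inj d).
    by rewrite /dot /=; field.
  have E' : dot u2 v = dot u2 v' / dot u1 v' * dot u1 v by rewrite -E mulfVK.
  move: E'; rewrite /dot /= => E'.
  by rewrite [X in X = _](_ : _ = (u2.1 * v.1 + u2.2 * v.2) - (u2.1 * v'.1 + u2.2 * v'.2) / (u1.1 * v'.1 + u1.2 * v'.2) * (u1.1 * v.1 + u1.2 * v.2)); [rewrite -E' subrr | field].
case=> /eqP; rewrite subr_eq0 => /eqP h1 /eqP; rewrite subr_eq0 => /eqP h2.
by rewrite /sc -h1 -h2 -surjective_pairing.
Qed.

Definition al u1 u2 u3 := det u3 u2 / det u1 u2.
Definition be u1 u2 u3 := det u1 u3 / det u1 u2.
Definition Q (a b t : F) :=
  b * a ^+ q * t ^+ 2 + (a * a ^+ q + b * b ^+ q - 1) * t + a * b ^+ q.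

Lemma root_of u1 u2 u3 v : det u1 u2 != 0 -> K (dot u1 v) -> K (dot u2 v) -> K (dot u3 v) ->
  Q (al u1 u2 u3) (be u1 u2 u3) (dot u2 v / dot u1 v) = 0.
Proof.
move=> d K1 K2 K3; have s0 := Kne0 K1.
apply: quad_root; first exact: Kdiv.
suff -> : al u1 u2 u3 + be u1 u2 u3 * (dot u2 v / dot u1 v) = dot u3 v / dot u1 v by exact: Kdiv.
move: d s0; rewrite /al /be /dot /det => d s0; field.
by rewrite d s0.
Qed.

Lemma core u1 u2 u3 v1 v2 v3 : u1 != (0,0) -> u2 != (0,0) ->
  K (dot u1 v1) -> K (dot u1 v2) -> K (dot u1 v3) ->
  K (dot u2 v1) -> K (dot u2 v2) -> K (dot u2 v3) ->
  K (dot u3 v1) -> K (dot u3 v2) -> K (dot u3 v3) ->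
  ~ dep u1 u2 -> ~ dep u2 u3 -> ~ dep u1 u3 ->
  ~ dep v2 v1 -> ~ dep v3 v1 -> ~ dep v3 v2 -> False.
Proof.
move=> nz1 nz2 K11 K12 K13 K21 K22 K23 K31 K32 K33 n12 n23 n13 m21 m31 m32.
have d12 := indep nz1 K11 K21 n12.
have d23 := indep nz2 K21 K31 n23.
have d13 := indep nz1 K11 K31 n13.
have a0 : al u1 u2 u3 != 0.
  rewrite /al mulf_neq0 ?invr_eq0 //.
  by move: d23; rewrite /det -oppr_eq0; apply: contra => /eqP <-; apply/eqP; ring.
have b0 : be u1 u2 u3 != 0 by rewrite /be mulf_neq0 ?invr_eq0.
have r1 := root_of d12 K11 K21 K31.
have r2 := root_of d12 K12 K22 K32.
have r3 := root_of d12 K13 K23 K33.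
apply: (three_roots _ r1 r2 r3).
- by rewrite mulf_neq0 // expf_neq0.
- by apply/eqP => E; apply: m21; apply: (tau_eq d12).
- by apply/eqP => E; apply: m31; apply: (tau_eq d12).
- by apply/eqP => E; apply: m32; apply: (tau_eq d12).
Qed.
End Core.

From mathcomp Require Import cyclic.
Import FinRing.Theory.
Section Main.
Variables (F : finFieldType) (H : {group {unit F}}).

Lemma inK x : (x \in Hset H) -> exists2 h, h \in H & x = val h.
Proof. by case/imsetP => h Hh ->; exists h. Qed.

Lemma KmulH x y : x \in Hset H -> y \in Hset H -> x * y \in Hset H.
Proof.
move=> /inK [g Hg ->] /inK [h Hh ->]; rewrite -val_unitM.
by apply/imsetP; exists (g * h)%g => //; rewrite groupM.
Qed.

Lemma KinvH x : x \in Hset H -> x^-1 \in Hset H.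
Proof.
move=> /inK [g Hg ->]; rewrite -val_unitV.
by apply/imsetP; exists (g^-1)%g => //; rewrite groupV.
Qed.

Lemma Kne0H x : x \in Hset H -> x != 0.
Proof. by move=> /inK [g _ ->]; rewrite -unitfE; exact: valP. Qed.

Lemma KpowH x : x \in Hset H -> x ^+ #|H| = 1.
Proof. by move=> /inK [g Hg ->]; rewrite -val_unitX expg_cardG. Qed.

Lemma vclass_sc l u : l \in Hset H -> vclass H (sc l u) = vclass H u.
Proof.
move=> /inK [g Hg ->]; apply/setP => x; apply/imsetP/imsetP => [[h Hh ->]|[h Hh ->]].
  by exists (h * g)%g; rewrite ?groupM // val_unitM /sc /= !mulrA.
exists (h * g^-1)%g; first by rewrite groupM ?groupV.
have g0 : FinRing.uval g != 0 by rewrite -unitfE; exact: valP.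
by rewrite /sc /= !mulrA divfK.
Qed.

Lemma vK (h : {unit F}) : h \in H -> val h \in Hset H.
Proof. by move=> Hh; apply/imsetP; exists h. Qed.

Lemma adj_dot u v : adj H (vclass H u) (vclass H v) -> dot u v \in Hset H.
Proof.
case/andP => _ /existsP [p /andP [/imsetP [g Hg ->] /existsP [r /andP [/imsetP [h Hh ->] Kp]]]].
have E : dot u v = (val g * val h)^-1 * ((val g * u.1) * (val h * v.1) + (val g * u.2) * (val h * v.2)).
  have g0 := Kne0H (vK Hg).
  have h0 := Kne0H (vK Hh).
  rewrite /dot; field; by rewrite g0 h0.
rewrite E; apply: KmulH => //; apply: KinvH; apply: KmulH; exact: vK.
Qed.

Lemma ndep u u' : vclass H u != vclass H u' -> ~ dep (fun x => x \in Hset H) u u'.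
Proof. by move=> ne [l [Kl E]]; move: ne; rewrite E vclass_sc // eqxx. Qed.

End Main.

Theorem theorem2 (q : nat) (F : finFieldType) (H : {group {unit F}}) :
  prime_power q -> #|F| = (q ^ 2)%N -> #|H| = q.+1 ->
  Kst_free (vertices H) (@adj F H) 3 3.
Proof.
move=> [p [k [pp k0 ->]]] cF cH [A [B [[sA sB _ cA cB] e]]].
have pc : p \in [pchar F] by apply: (@card_finPcharP _ p (k * 2)) => //; rewrite cF expnM.
have frob : forall x y : F, (x + y) ^+ (p ^ k) = x ^+ (p ^ k) + y ^+ (p ^ k).
  by move=> x y; apply: exprDn_pchar; rewrite pnatX pnatE ?pc.
have Kpow : forall x, x \in Hset H -> x ^+ (p ^ k).+1 = 1 by move=> x; rewrite -cH; exact: KpowH.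
have /card_gt2P [C1 [C2 [C3 [[C1A C2A C3A] [n12 n23 n31]]]]] : (2 < #|A|)%N by rewrite cA.
have /card_gt2P [D1 [D2 [D3 [[D1B D2B D3B] [m12 m23 m31]]]]] : (2 < #|B|)%N by rewrite cB.
have vert : forall C, C \in vertices H -> exists2 u, u != (0,0) & C = vclass H u.
  by move=> C /imsetP [u]; rewrite inE => nz ->; exists u.
have [u1 nz1 E1] := vert _ (subsetP sA _ C1A).
have [u2 nz2 E2] := vert _ (subsetP sA _ C2A).
have [u3 nz3 E3] := vert _ (subsetP sA _ C3A).
have [v1 _ F1] := vert _ (subsetP sB _ D1B).
have [v2 _ F2] := vert _ (subsetP sB _ D2B).
have [v3 _ F3] := vert _ (subsetP sB _ D3B).
subst C1 C2 C3 D1 D2 D3.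
apply: (@core F (fun x => x \in Hset H) (p ^ k) (@KmulH F H) (@KinvH F H) (@Kne0H F H) frob Kpow u1 u2 u3 v1 v2 v3) => //;
  try (apply: adj_dot; apply: e; assumption);
  apply: ndep => //; by rewrite eq_sym.
Qed.
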